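(* Fix $\alpha\in(0,1)$ and $\delta\ge 0$. For each integer $m$ (large enough that $m'\ge 2$) let $m'=\lfloor\alpha m\rfloor$ and define $h_\delta(i)$ for integers $i\ge m'$ by $h_\delta(m')=1$ and, for $i>m'$, $$h_\delta(i)=\Big(1-\frac2i\Big)h_\delta(i-1)+\frac{\delta}{i}\cdot\frac{m'(m'-1)}{(i-1)(i-2)}\Big[1-\frac{m'}{i-1}\Big].$$ Then $$\liminf_{m\to\infty}\frac1m\sum_{i=m'+1}^{m}h_\delta(i)\ \ge\ \alpha-\alpha^2+\delta\alpha^2\ln\alpha+\frac{\delta}{2}\left(\alpha-\alpha^3\right).$$ *)

(* Defs.v *)
From Stdlib Require Import Reals Lra Lia ZArith.
From Coquelicot Require Import Coquelicot.
Open Scope R_scope.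

Definition mprime (alpha : R) (m : nat) : nat :=
  Z.to_nat (Int_part (alpha * INR m)).

(* h_delta(i) for the parameter mp = m'.  h mp i = 1 for i <= mp
   (only the value at i = mp matters: h_delta(m') = 1), and for i > mp
   the recursion of the paper. *)
Fixpoint hdelta (delta : R) (mp : nat) (i : nat) : R :=
  match i with
  | O => 1
  | S j =>
      if (S j <=? mp)%nat then 1
      else
        let ir := INR (S j) in
        let mr := INR mp in
        (1 - 2 / ir) * hdelta delta mp j
        + (delta / ir) * ((mr * (mr - 1)) / ((ir - 1) * (ir - 2)))
          * (1 - mr / (ir - 1))
  end.

Definition avg_h (alpha delta : R) (m : nat) : R :=
  let mp := mprime alpha m in
  / INR m * sum_n_m (fun i => hdelta delta mp i) (S mp) m.

(* Main.v *)
Require Import Defs.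
From Stdlib Require Import Reals Lra Lia.
From Coquelicot Require Import Coquelicot.
Open Scope R_scope.

Lemma hd_base d p : hdelta d p p = 1.
Proof. destruct p; simpl; [reflexivity|]. now rewrite Nat.leb_refl. Qed.

Lemma hd_step d p j : (p <= j)%nat ->
  hdelta d p (S j) = (1 - 2 / INR (S j)) * hdelta d p j
        + (d / INR (S j)) * ((INR p * (INR p - 1)) / ((INR (S j) - 1) * (INR (S j) - 2)))
          * (1 - INR p / (INR (S j) - 1)).
Proof.
  intros H. cbn [hdelta]. replace (S j <=? p)%nat with false. reflexivity.
  symmetry; apply Nat.leb_gt; lia.
Qed.

Fixpoint Tsum (p n : nat) : R :=
  match n with O => 0 | S k => Tsum p k + / (INR p + INR k) end.

Lemma hclosed d p : (2 <= p)%nat -> forall n,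
  hdelta d p (S p + n) =
  INR p * (INR p - 1) / ((INR p + 1 + INR n) * (INR p + INR n))
   * (1 - d + d * INR p / (INR p + INR n) + d * Tsum p n).
Proof.
  intros Hp. assert (HP : 2 <= INR p) by (apply (le_INR 2); lia).
  induction n.
  - rewrite Nat.add_0_r, hd_step, hd_base by lia. rewrite S_INR. simpl Tsum.
    change (INR 0) with 0. field. lra.
  - replace (S p + S n)%nat with (S (S p + n)) by lia.
    rewrite hd_step by lia. rewrite IHn. simpl Tsum.
    rewrite !S_INR, plus_INR, S_INR.
    pose proof (pos_INR n). field. repeat split; lra.
Qed.

Definition Bn d p n : R :=
  let P := INR p in let M := INR p + 1 + INR n in
  (1-d)*(P-1)*(1-P/M) + d*P*(P-1)*(1/P - 1/(M-1) - Tsum p n / M)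
  + d*(P-1)/2*(1 - P^2/M^2).

Lemma Qbound d p : 0 <= d -> (2 <= p)%nat -> forall n,
  Bn d p n <= sum_n_m (hdelta d p) (S p) (S p + n).
Proof.
  intros Hd Hp. assert (HP : 2 <= INR p) by (apply (le_INR 2); lia).
  induction n.
  - rewrite Nat.add_0_r, sum_n_n. pose proof (hclosed d p Hp 0) as E.
    rewrite Nat.add_0_r in E. rewrite E. unfold Bn. change (INR 0) with 0. simpl Tsum.
    apply Rminus_le. 
    replace (_ - _) with (- (d*(INR p - 1)/(2*(INR p+1)^2))) by (field; lra).
    assert (0 <= d*(INR p - 1)/(2*(INR p+1)^2)).
    { apply Rmult_le_pos. nra. apply Rlt_le, Rinv_0_lt_compat. nra. }
    lra.
  - replace (S p + S n)%nat with (S (S p + n)) by lia.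
    rewrite sum_n_Sm by lia.
    replace (S (S p + n)) with (S p + S n)%nat by lia.
    rewrite (hclosed d p Hp (S n)). change plus with Rplus.
    unfold Bn in *. simpl Tsum. rewrite !S_INR in *.
    pose proof (pos_INR n).
    set (i := INR p + 1 + (INR n + 1)).
    match goal with |- ?A <= ?S + ?H => 
      assert (A - (Bn d p n) = H - d * INR p^2 * (INR p - 1) / (2 * i^2 * (i-1)^2)) end.
    { unfold Bn, i. field. repeat split; lra. }
    assert (0 <= d * INR p^2 * (INR p - 1) / (2 * i^2 * (i-1)^2)).
    { unfold i. apply Rmult_le_pos. apply Rmult_le_pos. nra. lra.
      apply Rlt_le, Rinv_0_lt_compat. assert (0 < i) by (unfold i; lra).
      assert (0 < i - 1) by (unfold i; lra). 
      apply Rmult_lt_0_compat. nra. nra. }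
    unfold Bn in *. lra.
Qed.

Lemma inv_le_ln x : 1 < x -> / x <= ln (x / (x - 1)).
Proof.
  intros Hx. pose proof (exp_ineq1_le (ln ((x-1)/x))) as E.
  rewrite exp_ln in E by (apply Rdiv_lt_0_compat; lra).
  replace (x / (x-1)) with (/ ((x-1)/x)) by (field; lra).
  rewrite ln_Rinv by (apply Rdiv_lt_0_compat; lra).
  replace ((x-1)/x) with (1 - /x) in * by (field; lra). lra.
Qed.

Lemma Tbound p : (2 <= p)%nat -> forall n,
  Tsum p n <= ln ((INR p + INR n - 1) / (INR p - 1)).
Proof.
  intros Hp. assert (HP : 2 <= INR p) by (apply (le_INR 2); lia).
  induction n.
  - simpl. change (INR 0) with 0. rewrite Rplus_0_r.
    replace ((INR p - 1)/(INR p - 1)) with 1 by (field; lra). rewrite ln_1; lra.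
  - simpl Tsum. rewrite S_INR. pose proof (pos_INR n).
    replace ((INR p + (INR n + 1) - 1) / (INR p - 1)) with
      (((INR p + INR n - 1) / (INR p - 1)) * ((INR p + INR n)/(INR p + INR n - 1)))
      by (field; lra).
    rewrite ln_mult by (apply Rdiv_lt_0_compat; lra).
    pose proof (inv_le_ln (INR p + INR n) ltac:(lra)). lra.
Qed.

From Stdlib Require Import ZArith.

Lemma mprime_bounds alpha m : 0 <= alpha ->
  alpha * INR m - 1 < INR (mprime alpha m) <= alpha * INR m.
Proof.
  intros Ha. unfold mprime. pose proof (base_Int_part (alpha * INR m)) as [H1 H2].
  assert (0 <= alpha * INR m) by (pose proof (pos_INR m); nra).
  assert (Hz : (0 <= Int_part (alpha * INR m))%Z).
  { apply le_IZR. assert (-1 < IZR (Int_part (alpha * INR m))) by lra.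
    apply lt_IZR in H0. apply IZR_le. lia. }
  rewrite (INR_IZR_INZ (Z.to_nat _)), Z2Nat.id by exact Hz. lra.
Qed.

Definition G d x e := (1-d)*(x-e)*(1-x) + d*(x-e)*(1 - x/(1-e))
  - d*x*(x-e)*ln(/(x-e)) + d/2*(x-e)*(1-x*x).

Lemma pointwise alpha d m : 0 < alpha < 1 -> 0 <= d -> 3 <= alpha * INR m ->
  G d (INR (mprime alpha m) / INR m) (/ INR m) <= avg_h alpha d m.
Proof.
  intros Ha Hd H3. unfold avg_h. 
  pose proof (mprime_bounds alpha m ltac:(lra)) as Hb.
  remember (mprime alpha m) as p. clear Heqp.
  assert (HM : 0 < INR m) by nra.
  assert (Hp2 : (2 <= p)%nat).
  { destruct (le_lt_dec 2 p) as [|l]; auto. apply lt_INR in l. simpl in l. lra. }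
  assert (HP : 2 <= INR p) by (apply (le_INR 2); lia).
  assert (Hpm : (p < m)%nat) by (apply INR_lt; nra).
  assert (HPm : INR p + 1 <= INR m) by (rewrite <- S_INR; apply le_INR; lia).
  set (n := (m - S p)%nat).
  assert (Hm : (S p + n)%nat = m) by (unfold n; lia).
  pose proof (Qbound d p Hd Hp2 n) as HQ. rewrite Hm in HQ.
  pose proof (Tbound p Hp2 n) as HT.
  assert (HN : INR n = INR m - INR p - 1).
  { rewrite <- Hm, plus_INR, S_INR. ring. }
  rewrite HN in HT.
  assert (HT2 : Tsum p n <= ln (INR m / (INR p - 1))).
  { eapply Rle_trans. apply HT. apply ln_le. apply Rdiv_lt_0_compat; lra.
    unfold Rdiv. apply Rmult_le_compat_r. apply Rlt_le, Rinv_0_lt_compat; lra. lra. }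
  apply Rle_trans with (/ INR m * Bn d p n).
  2:{ apply Rmult_le_compat_l. apply Rlt_le, Rinv_0_lt_compat; lra. exact HQ. }
  unfold G, Bn. rewrite HN.
  replace (/ (INR p / INR m - / INR m)) with (INR m / (INR p - 1)) by (field; lra).
  set (L := ln (INR m / (INR p - 1))) in *.
  match goal with |- ?A <= ?B => assert (B - A = d*INR p*(INR p-1)/INR m^2 * (L - Tsum p n)) end.
  { field. repeat split; lra. }
  assert (0 <= d*INR p*(INR p-1)/INR m^2 * (L - Tsum p n)).
  { apply Rmult_le_pos; [|lra]. apply Rmult_le_pos. 
    apply Rmult_le_pos; [apply Rmult_le_pos|]; lra.
    apply Rlt_le, Rinv_0_lt_compat; nra. }
  lra.
Qed.

Theorem lemma4p8 (alpha delta : R) (Ha : 0 < alpha < 1) (Hd : 0 <= delta) :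
  Rbar_le
    (Finite (alpha - alpha ^ 2 + delta * alpha ^ 2 * ln alpha
             + delta / 2 * (alpha - alpha ^ 3)))
    (LimInf_seq (avg_h alpha delta)).
Proof.
  set (x := fun m => INR (mprime alpha m) / INR m).
  set (e := fun m => / INR m).
  assert (He : is_lim_seq e 0).
  { unfold e. replace (Finite 0) with (Rbar_inv p_infty) by reflexivity.
    apply is_lim_seq_inv. apply is_lim_seq_INR. discriminate. }
  assert (Hx : is_lim_seq x alpha).
  { apply is_lim_seq_incr_1.
    apply is_lim_seq_le_le with (u := fun n => alpha - e (S n)) (w := fun _ => alpha).
    - intros n. unfold x, e. pose proof (mprime_bounds alpha (S n) ltac:(lra)) as Hb.
      assert (0 < INR (S n)) by (apply lt_0_INR; lia).
      split.
      + apply Rmult_le_reg_r with (INR (S n)); auto.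
        unfold Rdiv. rewrite Rmult_minus_distr_r, !Rmult_assoc, Rinv_l by lra. lra.
      + apply Rmult_le_reg_r with (INR (S n)); auto.
        unfold Rdiv. rewrite !Rmult_assoc, Rinv_l by lra. lra.
    - replace (Finite alpha) with (Finite (alpha - 0)) by (f_equal; ring).
      apply is_lim_seq_minus'. apply is_lim_seq_const. 
      apply (is_lim_seq_incr_1 e 0). exact He.
    - apply is_lim_seq_const. }
  assert (Hln : is_lim_seq (fun m => ln (/ (x m - e m))) (ln (/ (alpha - 0)))).
  { apply is_lim_seq_continuous.
    apply continuity_pt_filterlim, continuous_ln. apply Rinv_0_lt_compat; lra.
    assert (H := is_lim_seq_inv (fun m => x m - e m) (alpha - 0)
                  (is_lim_seq_minus' _ _ _ _ Hx He)).
    simpl in H. apply H. intro Hc. injection Hc. lra. }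
  assert (Hq : is_lim_seq (fun m => x m / (1 - e m)) (alpha / (1 - 0))).
  { unfold Rdiv. apply is_lim_seq_mult'. exact Hx.
    assert (H := is_lim_seq_inv (fun m => 1 - e m) (1 - 0)
                  (is_lim_seq_minus' _ _ _ _ (is_lim_seq_const 1) He)).
    simpl in H. apply H. intro Hc. injection Hc. lra. }
  assert (HG : is_lim_seq (fun m => G delta (x m) (e m)) (G delta alpha 0)).
  { unfold G.
    repeat first [ exact Hx | exact He | exact Hln | exact Hq
                 | apply is_lim_seq_minus' | apply is_lim_seq_plus'
                 | apply (proj1 (is_lim_seq_opp _ (Finite _)))
                 | apply is_lim_seq_mult' | apply is_lim_seq_const ]. }
  replace (Finite _) with (LimInf_seq (fun m => G delta (x m) (e m))).
  2:{ rewrite (is_LimInf_seq_unique _ _ (is_lim_LimInf_seq _ _ HG)).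
      f_equal. unfold G. replace (alpha - 0) with alpha by ring.
      replace (1 - 0) with 1 by ring. rewrite ln_Rinv by lra. field. }
  apply LimInf_le.
  destruct (archimed (3 / alpha)) as [Hup _].
  exists (Z.to_nat (up (3/alpha))). intros m Hm.
  apply pointwise; auto.
  apply le_INR in Hm. rewrite INR_IZR_INZ, Z2Nat.id in Hm.
  2:{ apply le_IZR. assert (0 < 3/alpha) by (apply Rdiv_lt_0_compat; lra). lra. }
  apply Rmult_le_reg_l with (/alpha). apply Rinv_0_lt_compat; lra.
  rewrite <- Rmult_assoc, Rinv_l by lra. unfold Rdiv in Hup. lra.
Qed.
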